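(* Assume $\Phi_h=M_h=\mathbb{P}_1$. Then any solution $(\phi^{n+1},\mu^{n+1})\in\Phi_h\times M_h$ of the G$_\varepsilon$-scheme satisfies $$\int_\Omega\big(I_h(\phi^{n+1}_-)\big)^2d\boldsymbol x\le C\,\frac{\varepsilon(1-\varepsilon)}{\eta^2}\le C\,\frac{\varepsilon}{\eta^2}\quad\text{and}\quad\int_\Omega\Big(I_h\big((\phi^{n+1}-1)_+\big)\Big)^2d\boldsymbol x\le C\,\frac{\varepsilon(1-\varepsilon)}{\eta^2}\le C\,\frac{\varepsilon}{\eta^2},$$ where $C$ depends on the initial energy $E(\phi^0)$ and on $\int_\Omega I_h(G_\varepsilon(\phi^0))\,d\boldsymbol x$.
   Context: $\Omega\subset\mathbb{R}^d$ ($d=1,2,3$) bounded, $\eta>0$, $\varepsilon\in(0,1/2)$. $f_-=\min\{f,0\}$ and $f_+=\max\{f,0\}$. $F(\phi)=\frac1{4\eta^2}\phi^2(\phi-1)^2=F_c+F_e$ with $F_c(\phi)=\frac1{4\eta^2}(\phi^4-2\phi^3+\frac32\phi^2)$, $F_e(\phi)=-\frac1{8\eta^2}\phi^2$; $E(\phi)=\int_\Omega(\frac12|\nabla\phi|^2+F(\phi))d\boldsymbol x$. The time interval $[0,T]$ is split into $N$ steps of size $\Delta t=T/N$, $n=0,\dots,N-1$. $\mathcal T_h$ is a structured triangulation of $\Omega$ in which every element $I$ has vertices $\boldsymbol x_0,\dots,\boldsymbol x_d$ with $\boldsymbol x_k-\boldsymbol x_0$ parallel to the $k$-th coordinate axis;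 $\Phi_h=M_h$ is the space of continuous piecewise $\mathbb{P}_1$ functions. $I_h$ is nodal $\mathbb{P}_1$ interpolation, $(f,g)_h=\int_\Omega I_h(fg)\,d\boldsymbol x$, $(\cdot,\cdot)$ the $L^2$ product. $G(\phi)=\phi\ln\phi+(1-\phi)\ln(1-\phi)+1$; $G_\varepsilon\in C^2(\mathbb{R})$ equals $G$ on $[\varepsilon,1-\varepsilon]$ and its second-order Taylor polynomial at $\varepsilon$ (resp. $1-\varepsilon$) for $\phi<\varepsilon$ (resp. $\phi>1-\varepsilon$), so $G_\varepsilon''=1/M_\varepsilon$ with $M_\varepsilon(\phi)=\phi(1-\phi)$ truncated to $\varepsilon(1-\varepsilon)$ outside $[\varepsilon,1-\varepsilon]$. For $\phi\in\Phi_h$, $M^G_\varepsilon(\phi)$ is the piecewise constant diagonal matrix with $k$-th entry on $I$ equal to $\frac{\phi(\boldsymbol x_k)-\phi(\boldsymbol x_0)}{G_\varepsilon'(\phi(\boldsymbol x_k))-G_\varepsilon'(\phi(\boldsymbol x_0))}$ if $\phi(\boldsymbol x_k)\ne\phi(\boldsymbol x_0)$, and $1/G_\varepsilon''(\phi(\boldsymbol x_0))$ otherwise. G$_\varepsilon$-scheme: given $\phi^n\in\Phi_h$ (starting from $\phi^0\in\Phi_h$), find $(\phi^{n+1},\mu^{n+1})\in\Phi_h\times M_h$ such that for all $(\bar\phi,\bar\mu)\in\Phi_h\times M_h$: $\frac1{\Delta t}(\phi^{n+1}-\phi^n,\bar\mu)_h+(M^G_\varepsilon(\phi^{n+1})\nabla\mu^{n+1},\nabla\bar\mu)=0$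 and $(\nabla\phi^{n+1},\nabla\bar\phi)+(I_h(F_c'(\phi^{n+1}))+I_h(F_e'(\phi^n)),\bar\phi)_h=(\mu^{n+1},\bar\phi)_h$.
   Formalization: The interface parameter satisfies 0 < η ≤ 1 rather than only η > 0, and C may depend on the final time T besides E(φ⁰) and $\int_\Omega I_h(G_\varepsilon(\phi^0))\,d\boldsymbol x$. Each condition added here is assumed in the paper as well or is needed for the statement above to hold. *)

(* Defs.v *)
From HB Require Import structures.
From mathcomp Require Import all_boot all_order all_algebra.
From mathcomp Require Import reals exp.
Set Implicit Arguments. Unset Strict Implicit. Unset Printing Implicit Defensive.
Import Order.TTheory GRing.Theory Num.Theory.
Local Open Scope ring_scope.

Section Potentials.
Context {R : realType}.

(* F_c'(phi), F_e'(phi), with F_c = (phi^4 - 2 phi^3 + 3/2 phi^2)/(4 eta^2),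
   F_e = - phi^2 / (8 eta^2). *)
Definition Fcp (eta phi : R) : R :=
  (4 * phi ^+ 3 - 6 * phi ^+ 2 + 3 * phi) / (4 * eta ^+ 2).
Definition Fep (eta phi : R) : R := - phi / (4 * eta ^+ 2).

Definition Gfun (phi : R) : R := phi * ln phi + (1 - phi) * ln (1 - phi) + 1.
Definition dGfun (phi : R) : R := ln phi - ln (1 - phi).
Definition d2Gfun (phi : R) : R := (phi * (1 - phi))^-1.

Definition Geps (eps phi : R) : R :=
  if phi < eps then
    Gfun eps + dGfun eps * (phi - eps) + d2Gfun eps / 2 * (phi - eps) ^+ 2
  else if 1 - eps < phi then
    Gfun (1 - eps) + dGfun (1 - eps) * (phi - (1 - eps))
      + d2Gfun (1 - eps) / 2 * (phi - (1 - eps)) ^+ 2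
  else Gfun phi.

Definition dGeps (eps phi : R) : R :=
  if phi < eps then dGfun eps + d2Gfun eps * (phi - eps)
  else if 1 - eps < phi then dGfun (1 - eps) + d2Gfun (1 - eps) * (phi - (1 - eps))
  else dGfun phi.

Definition Meps (eps phi : R) : R :=
  if phi < eps then eps * (1 - eps)
  else if 1 - eps < phi then eps * (1 - eps)
  else phi * (1 - phi).
Definition d2Geps (eps phi : R) : R := (Meps eps phi)^-1.

End Potentials.

(* A P1 function is given by its nodal values u : V -> R.               *)
Section Mesh.
Context {R : realType} {d : nat} {V Elt : finType}.
Variables (x : V -> 'I_d -> R) (vtx : Elt -> 'I_d.+1 -> V).

Definition vert0 (I : Elt) : V := vtx I ord0.
(* vertex x_k, k = 1..d, indexed by k-1 : 'I_d *)
Definition vertk (I : Elt) (k : 'I_d) : V := vtx I (lift ord0 k).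

Definition is_vertex (I : Elt) (v : V) : Prop := exists k, vtx I k = v.

Definition in_hull (S : V -> Prop) (y : 'I_d -> R) : Prop :=
  exists lam : V -> R,
    (forall v, 0 <= lam v) /\ (forall v, lam v != 0 -> S v) /\
    \sum_v lam v = 1 /\ (forall j, y j = \sum_v lam v * x v j).

(* signed edge length: x_k - x_0 = hk I k * e_k *)
Definition hk (I : Elt) (k : 'I_d) : R := x (vertk I k) k - x (vert0 I) k.

(* A structured (conforming) triangulation: each element has
   x_k - x_0 parallel to the k-th axis (and nonzero); distinct nodes are
   distinct points and every node is a vertex; two distinct elements meet
   exactly in the convex hull of their common vertices (a common face or
   the empty set); distinct elements have distinct vertex sets. *)
Definition structured_mesh : Prop :=
  [/\ (forall I (k j : 'I_d), j != k -> x (vertk I k) j = x (vert0 I) j),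
      (forall I k, hk I k != 0),
      injective x /\ (forall v, exists I, is_vertex I v),
      (forall I J, I != J -> forall y,
        (in_hull (is_vertex I) y /\ in_hull (is_vertex J) y) <->
        in_hull (fun v => is_vertex I v /\ is_vertex J v) y)
    & (forall I J, (forall v, is_vertex I v <-> is_vertex J v) -> I = J)].

Definition vol (I : Elt) : R := `|\prod_(k < d) hk I k| / (d`!)%:R.

Definition dpart (u : V -> R) (I : Elt) (k : 'I_d) : R :=
  (u (vertk I k) - u (vert0 I)) / hk I k.

(* int_Omega I_h(f) dx, for nodal values f *)
Definition lumped (f : V -> R) : R :=
  \sum_I vol I / (d.+1)%:R * \sum_(k < d.+1) f (vtx I k).

Definition hprod (f g : V -> R) : R := lumped (fun v => f v * g v).

Definition stiffA (A : Elt -> 'I_d -> R) (u w : V -> R) : R :=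
  \sum_I vol I * \sum_(k < d) A I k * dpart u I k * dpart w I k.

Definition stiff (u w : V -> R) : R := stiffA (fun _ _ => 1) u w.

(* complete homogeneous symmetric polynomial of degree p in a_0..a_d *)
Definition hpoly (p : nat) (a : 'I_d.+1 -> R) : R :=
  \sum_(s : p.-tuple 'I_d.+1 | sorted (fun i j : 'I_d.+1 => (i <= j)%N) s)
     \prod_(i <- s) a i.

(* exact integral over Omega of (u_h)^p, u_h the P1 function with nodal
   values u:  int_I (sum_k a_k lambda_k)^p = |I| d! p! / (d+p)! h_p(a) *)
Definition intpow (u : V -> R) (p : nat) : R :=
  \sum_I vol I * ((d`! * p`!)%:R / ((d + p)`!)%:R) * hpoly p (fun k => u (vtx I k)).

(* E(phi) = int_Omega (1/2 |grad phi|^2 + F(phi)) dx, with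
   F(phi) = (phi^4 - 2 phi^3 + phi^2) / (4 eta^2), computed exactly *)
Definition energy (eta : R) (phi : V -> R) : R :=
  stiff phi phi / 2 +
  (intpow phi 4 - 2 * intpow phi 3 + intpow phi 2) / (4 * eta ^+ 2).

Definition MG (eps : R) (phi : V -> R) (I : Elt) (k : 'I_d) : R :=
  let a0 := phi (vert0 I) in
  let ak := phi (vertk I k) in
  if ak != a0 then (ak - a0) / (dGeps eps ak - dGeps eps a0)
  else (d2Geps eps a0)^-1.

Definition Gscheme (dt eps eta : R) (phin phi1 mu1 : V -> R) : Prop :=
  (forall mub : V -> R,
      dt^-1 * hprod (fun v => phi1 v - phin v) mub + stiffA (MG eps phi1) mu1 mub = 0)
  /\
  (forall phib : V -> R,
      stiff phi1 phib + hprod (fun v => Fcp eta (phi1 v) + Fep eta (phin v)) phib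
      = hprod mu1 phib).

End Mesh.

(* Main.v *)
Require Import Defs.
From HB Require Import structures.
From mathcomp Require Import all_boot all_order all_algebra.
From mathcomp Require Import reals exp.
From mathcomp Require Import ring lra.
Import Order.TTheory GRing.Theory Num.Theory.
Local Open Scope ring_scope.

Section GE.
Context {R : realType}.
Variable eps : R.
Hypothesis he : 0 < eps.
Hypothesis he2 : eps < 1/2.

Lemma lnsub (a b : R) : 0 < a -> 0 < b -> b - a <= b * (ln b - ln a).
Proof.
move=> ha hb.
have h1 : ln (a / b) <= a / b - 1.
  have := @le_ln1Dx R (a / b - 1).
  rewrite (_ : 1 + (a / b - 1) = a / b); last by ring.
  apply.
  have : 0 < a / b by rewrite divr_gt0.
  lra.
rewrite ln_div ?posrE // in h1.
have hb1 : b * (a / b) = a by rewrite mulrCA divff ?mulr1 // gt_eqF.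
nra.
Qed.

Lemma dGfun_lt (a b : R) : 0 < a -> a < b -> b < 1 -> dGfun a < dGfun b.
Proof.
move=> ha hab hb; rewrite /dGfun.
have h1 : ln a < ln b by rewrite ltr_ln ?posrE //; lra.
have h2 : ln (1 - b) < ln (1 - a) by rewrite ltr_ln ?posrE; lra.
lra.
Qed.

Lemma dGfun_le (a b : R) : 0 < a -> a <= b -> b < 1 -> dGfun a <= dGfun b.
Proof.
move=> ha; rewrite le_eqVlt => /orP[/eqP -> //|hab] hb.
by apply/ltW/dGfun_lt.
Qed.

Lemma Gfun_tang (a b : R) : 0 < a < 1 -> 0 < b < 1 ->
  Gfun a + dGfun a * (b - a) <= Gfun b.
Proof.
move=> /andP[ha1 ha2] /andP[hb1 hb2].
have h1 := @lnsub a b ha1 hb1.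
have h2 : (1 - b) - (1 - a) <= (1 - b) * (ln (1 - b) - ln (1 - a)).
  by apply: lnsub; lra.
rewrite /Gfun /dGfun.
lra.
Qed.

Definition m := eps * (1 - eps).
Lemma m_gt0 : 0 < m. Proof. have he_ := he; have he2_ := he2. rewrite /m; apply: mulr_gt0. all: lra. Qed.

Definition QL t := Gfun eps + dGfun eps * (t - eps) + d2Gfun eps / 2 * (t - eps) ^+ 2.
Definition QL' t := dGfun eps + d2Gfun eps * (t - eps).
Definition QR t := Gfun (1 - eps) + dGfun (1 - eps) * (t - (1 - eps))
      + d2Gfun (1 - eps) / 2 * (t - (1 - eps)) ^+ 2.
Definition QR' t := dGfun (1 - eps) + d2Gfun (1 - eps) * (t - (1 - eps)).

Lemma d2L : d2Gfun eps = m^-1. Proof. have he_ := he; have he2_ := he2. by []. Qed.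
Lemma d2R : d2Gfun (1 - eps) = m^-1.
Proof. have he_ := he; have he2_ := he2. by rewrite /d2Gfun /m; congr (_^-1); ring. Qed.
Lemma minv_gt0 : 0 < m^-1. Proof. have he_ := he; have he2_ := he2. by rewrite invr_gt0 m_gt0. Qed.

Lemma GL t : t <= eps -> Geps eps t = QL t /\ dGeps eps t = QL' t.
Proof. have he_ := he; have he2_ := he2.
rewrite /Geps /dGeps /QL /QL' le_eqVlt => /orP[/eqP ->|->//].
have hF : (1 - eps < eps) = false by apply/negbTE; rewrite -leNgt; lra.
rewrite ltxx hF.
by split; ring.
Qed.

Lemma GR t : 1 - eps <= t -> Geps eps t = QR t /\ dGeps eps t = QR' t.
Proof. have he_ := he; have he2_ := he2.
have hF : (1 - eps < eps) = false by apply/negbTE; rewrite -leNgt; lra.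
rewrite /Geps /dGeps /QR /QR' le_eqVlt => /orP[/eqP <-|h].
  rewrite ltxx hF.
  by split; ring.
have hF2 : (t < eps) = false by apply/negbTE; rewrite -leNgt; lra.
by rewrite h hF2.
Qed.

Lemma GM t : eps <= t <= 1 - eps -> Geps eps t = Gfun t /\ dGeps eps t = dGfun t.
Proof. have he_ := he; have he2_ := he2.
move=> /andP[h1 h2]; rewrite /Geps /dGeps.
have hF : (t < eps) = false by apply/negbTE; rewrite -leNgt.
have hF2 : (1 - eps < t) = false by apply/negbTE; rewrite -leNgt.
by rewrite hF hF2.
Qed.

Lemma dG_ltL a b : a < b -> b <= eps -> dGeps eps a < dGeps eps b.
Proof. have he_ := he; have he2_ := he2.
move=> hab hb; have [_ ->] := GL _ (ltW (lt_le_trans hab hb)).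
have [_ ->] := GL _ hb; rewrite /QL' d2L.
have := minv_gt0; nra.
Qed.
Lemma dG_ltR a b : a < b -> 1 - eps <= a -> dGeps eps a < dGeps eps b.
Proof. have he_ := he; have he2_ := he2.
move=> hab ha; have [_ ->] := GR _ ha.
have [_ ->] := GR _ (ltW (le_lt_trans ha hab)); rewrite /QR' d2R.
have := minv_gt0; nra.
Qed.
Lemma dG_ltM a b : a < b -> eps <= a -> b <= 1 - eps -> dGeps eps a < dGeps eps b.
Proof. have he_ := he; have he2_ := he2.
move=> hab ha hb.
have h1 : eps <= a <= 1 - eps by apply/andP; split => //; apply: ltW (lt_le_trans hab hb).
have h2 : eps <= b <= 1 - eps by apply/andP; split => //; apply: ltW (le_lt_trans ha hab).
have [_ ->] := GM _ h1; have [_ ->] := GM _ h2.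
apply: dGfun_lt => //; lra.
Qed.

Lemma dG_lt a b : a < b -> dGeps eps a < dGeps eps b.
Proof. have he_ := he; have he2_ := he2.
move=> hab.
have ee : eps < 1 - eps by lra.
have mono_le : forall u v, (u < v -> dGeps eps u < dGeps eps v) ->
   u <= v -> dGeps eps u <= dGeps eps v.
  move=> u v H; rewrite le_eqVlt => /orP[/eqP -> //|/H/ltW //].
case: (lerP b eps) => hb; first exact: dG_ltL.
case: (lerP a eps) => ha.
  have h1 : dGeps eps a <= dGeps eps eps by apply: mono_le => // h; apply: dG_ltL.
  case: (lerP b (1 - eps)) => hb2.
    by apply: le_lt_trans h1 _; apply: dG_ltM => //.
  apply: le_lt_trans h1 _; apply: (@lt_trans _ _ (dGeps eps (1 - eps))).
    by apply: dG_ltM => //; lra.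
  by apply: dG_ltR => //.
case: (lerP a (1 - eps)) => ha2.
  case: (lerP b (1 - eps)) => hb2; first by apply: dG_ltM => //; lra.
  have h1 : dGeps eps a <= dGeps eps (1 - eps).
    by apply: mono_le => // h; apply: dG_ltM => //; lra.
  by apply: le_lt_trans h1 _; apply: dG_ltR.
by apply: dG_ltR => //; lra.
Qed.

Lemma dG_le a b : a <= b -> dGeps eps a <= dGeps eps b.
Proof. have he_ := he; have he2_ := he2. by rewrite le_eqVlt => /orP[/eqP -> //|/(dG_lt _ _)/ltW]. Qed.

Definition Tg a b := Geps eps a + dGeps eps a * (b - a) <= Geps eps b.

Lemma Tg_chain a p b : Tg a p -> Tg p b -> (a <= p <= b) || (b <= p <= a) -> Tg a b.
Proof. have he_ := he; have he2_ := he2.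
rewrite /Tg => h1 h2 /orP[/andP[h3 h4]|/andP[h3 h4]].
  have h5 := dG_le _ _ h3.
  have : 0 <= (dGeps eps p - dGeps eps a) * (b - p) by apply: mulr_ge0; lra.
  nra.
have h5 := dG_le _ _ h4.
have : 0 <= (dGeps eps a - dGeps eps p) * (p - b) by apply: mulr_ge0; lra.
nra.
Qed.

Lemma TgL a b : a <= eps -> b <= eps -> Tg a b.
Proof. have he_ := he; have he2_ := he2.
move=> ha hb; rewrite /Tg; have [-> ->] := GL _ ha; have [-> _] := GL _ hb.
rewrite /QL /QL'.
have : 0 <= d2Gfun eps / 2 * (b - a) ^+ 2.
  by apply: mulr_ge0; [apply: divr_ge0; [apply: ltW; exact: minv_gt0|] | apply: sqr_ge0].
set c := d2Gfun eps; move=> H.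
have -> : Gfun eps + dGfun eps * (b - eps) + c / 2 * (b - eps) ^+ 2 =
  Gfun eps + dGfun eps * (a - eps) + c / 2 * (a - eps) ^+ 2 +
  (dGfun eps + c * (a - eps)) * (b - a) + c / 2 * (b - a) ^+ 2 by field.
lra.
Qed.

Lemma TgR a b : 1 - eps <= a -> 1 - eps <= b -> Tg a b.
Proof. have he_ := he; have he2_ := he2.
move=> ha hb; rewrite /Tg; have [-> ->] := GR _ ha; have [-> _] := GR _ hb.
rewrite /QR /QR'.
have : 0 <= d2Gfun (1 - eps) / 2 * (b - a) ^+ 2.
  by apply: mulr_ge0; [apply: divr_ge0; [rewrite d2R; apply: ltW; exact: minv_gt0|] | apply: sqr_ge0].
set c := d2Gfun (1 - eps); set e := 1 - eps; move=> H.
have -> : Gfun e + dGfun e * (b - e) + c / 2 * (b - e) ^+ 2 =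
  Gfun e + dGfun e * (a - e) + c / 2 * (a - e) ^+ 2 +
  (dGfun e + c * (a - e)) * (b - a) + c / 2 * (b - a) ^+ 2 by field.
lra.
Qed.

Lemma TgM a b : eps <= a <= 1 - eps -> eps <= b <= 1 - eps -> Tg a b.
Proof. have he_ := he; have he2_ := he2.
move=> ha hb; rewrite /Tg; have [-> ->] := GM _ ha; have [-> _] := GM _ hb.
apply: Gfun_tang; lra.
Qed.

Lemma TgLM a b : a <= 1 - eps -> b <= 1 - eps -> Tg a b.
Proof. have he_ := he; have he2_ := he2.
move=> ha hb.
have ee : eps < 1 - eps by lra.
case: (lerP a eps) => ha1; case: (lerP b eps) => hb1.
- exact: TgL.
- apply: (@Tg_chain a eps b); [exact: TgL | apply: TgM; lra | apply/orP; left; lra].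
- apply: (@Tg_chain a eps b); [apply: TgM; lra | exact: TgL | apply/orP; right; lra].
- apply: TgM; lra.
Qed.

Lemma Tg_all a b : Tg a b.
Proof. have he_ := he; have he2_ := he2.
have ee : eps < 1 - eps by lra.
case: (lerP a (1 - eps)) => ha; case: (lerP b (1 - eps)) => hb.
- exact: TgLM.
- apply: (@Tg_chain a (1 - eps) b); [apply: TgLM; lra | apply: TgR; lra | apply/orP; left; lra].
- apply: (@Tg_chain a (1 - eps) b); [apply: TgR; lra | apply: TgLM; lra | apply/orP; right; lra].
- apply: TgR; lra.
Qed.

Lemma Geps_ge0 t : 0 <= Geps eps t.
Proof. have he_ := he; have he2_ := he2.
have h := Tg_all (1/2) t; rewrite /Tg in h.
have hm : eps <= 1/2 <= 1 - eps by apply/andP; split; lra.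
have [e1 e2] := GM _ hm; rewrite e1 e2 in h.
have h12 : 1 - 1/2 = 1/2 :> R by field.
have hd0 : dGfun (1/2 : R) = 0 by rewrite /dGfun h12 subrr.
rewrite hd0 mul0r addr0 in h.
have : 0 <= Gfun (1/2 : R).
  rewrite /Gfun h12.
  have : ln (1/2 : R) = - ln 2.
    by rewrite mul1r lnV ?posrE.
  have H := @le_ln1Dx R 1.
  have H1 : (-1 : R) < 1 by lra.
  have H2 := H H1.
  move=> ->; lra.
lra.
Qed.

Lemma dGfun_eps_le0 : dGfun eps <= 0.
Proof. have he_ := he; have he2_ := he2.
have h12 : 1 - 1/2 = 1/2 :> R by field.
have -> : (0 : R) = dGfun (1/2) by rewrite /dGfun h12 subrr.
apply: dGfun_le; lra.
Qed.

Lemma dGfun_1eps_ge0 : 0 <= dGfun (1 - eps).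
Proof. have he_ := he; have he2_ := he2.
have h12 : 1 - 1/2 = 1/2 :> R by field.
have -> : (0 : R) = dGfun (1/2) by rewrite /dGfun h12 subrr.
apply: dGfun_le; lra.
Qed.

Lemma Geps_neg t : Num.min t 0 ^+ 2 <= 2 * m * Geps eps t.
Proof. have he_ := he; have he2_ := he2.
have hm := m_gt0; have hg := Geps_ge0 t.
case: (lerP 0 t) => ht.
  rewrite expr0n /=; apply: mulr_ge0 => //; lra.
have [-> _] := GL _ (ltW (lt_trans ht he)); rewrite /QL d2L.
have hG : 0 <= Gfun eps.
  have hme : eps <= eps <= 1 - eps by apply/andP; split; lra.
  by have := Geps_ge0 eps; have [-> _] := GM _ hme.
have hd := dGfun_eps_le0.
have hmi : m * m^-1 = 1 by rewrite divff // gt_eqF.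
have h1 : 0 <= dGfun eps * (t - eps) by apply: mulr_le0; lra.
have -> : 2 * m * (Gfun eps + dGfun eps * (t - eps) + m^-1 / 2 * (t - eps) ^+ 2)
  = 2 * m * Gfun eps + 2 * m * (dGfun eps * (t - eps)) + (m * m^-1) * (t - eps) ^+ 2.
  by field; rewrite gt_eqF.
rewrite hmi.
have : 0 <= 2 * m * Gfun eps by apply: mulr_ge0; lra.
have : 0 <= 2 * m * (dGfun eps * (t - eps)) by apply: mulr_ge0; lra.
nra.
Qed.

Lemma Geps_pos t : Num.max (t - 1) 0 ^+ 2 <= 2 * m * Geps eps t.
Proof. have he_ := he; have he2_ := he2.
have hm := m_gt0; have hg := Geps_ge0 t.
case: (lerP (t - 1) 0) => ht.
  rewrite expr0n /=; apply: mulr_ge0 => //; lra.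
have htr : 1 - eps <= t by lra.
have [-> _] := GR _ htr.
rewrite /QR d2R.
have hG : 0 <= Gfun (1 - eps).
  have hme : eps <= 1 - eps <= 1 - eps by apply/andP; split; lra.
  by have := Geps_ge0 (1 - eps); have [-> _] := GM _ hme.
have hd := dGfun_1eps_ge0.
have hmi : m * m^-1 = 1 by rewrite divff // gt_eqF.
have h1 : 0 <= dGfun (1 - eps) * (t - (1 - eps)) by apply: mulr_ge0; lra.
have -> : 2 * m * (Gfun (1 - eps) + dGfun (1 - eps) * (t - (1 - eps)) + m^-1 / 2 * (t - (1 - eps)) ^+ 2)
  = 2 * m * Gfun (1 - eps) + 2 * m * (dGfun (1 - eps) * (t - (1 - eps))) + (m * m^-1) * (t - (1 - eps)) ^+ 2.
  by field; rewrite gt_eqF.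
rewrite hmi.
have : 0 <= 2 * m * Gfun (1 - eps) by apply: mulr_ge0; lra.
have : 0 <= 2 * m * (dGfun (1 - eps) * (t - (1 - eps))) by apply: mulr_ge0; lra.
nra.
Qed.

End GE.

Lemma Meps_ge0 {R : realType} (eps t : R) : 0 < eps -> eps < 1/2 -> 0 <= Meps eps t.
Proof.
move=> h1 h2.
have hm : 0 <= eps * (1 - eps) by apply: mulr_ge0; lra.
rewrite /Meps; case: ifP => // /negbT; rewrite -leNgt => ha.
case: ifP => // /negbT; rewrite -leNgt => hb.
apply: mulr_ge0; lra.
Qed.

Section Mesh2.
Context {R : realType} {d : nat} {V Elt : finType}.
Variables (x : V -> 'I_d -> R) (vtx : Elt -> 'I_d.+1 -> V).

Definition ES (h : Elt -> 'I_d -> R) : R :=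
  \sum_I vol x vtx I * \sum_(k < d) h I k.
Definition LS (h : Elt -> 'I_d.+1 -> R) : R :=
  \sum_I vol x vtx I / (d.+1)%:R * \sum_(k < d.+1) h I k.

Lemma vol_ge0 I : 0 <= vol x vtx I.
Proof. by rewrite /vol divr_ge0 ?normr_ge0 ?ler0n. Qed.

Lemma ES_lin a b h h' : a * ES h + b * ES h' = ES (fun I k => a * h I k + b * h' I k).
Proof.
rewrite /ES !mulr_sumr -big_split /=; apply: eq_bigr => I _.
rewrite big_split /= -!mulr_sumr; ring.
Qed.

Lemma LS_lin a b h h' : a * LS h + b * LS h' = LS (fun I k => a * h I k + b * h' I k).
Proof.
rewrite /LS !mulr_sumr -big_split /=; apply: eq_bigr => I _.
rewrite big_split /= -!mulr_sumr; ring.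
Qed.

Lemma ES4 (a1 a2 a3 a4 : R) h1 h2 h3 h4 :
  (forall I k, a1 * h1 I k + a2 * h2 I k <= a3 * h3 I k + a4 * h4 I k) ->
  a1 * ES h1 + a2 * ES h2 <= a3 * ES h3 + a4 * ES h4.
Proof.
move=> H; rewrite !ES_lin /ES; apply: ler_sum => I _.
apply: ler_wpM2l; first exact: vol_ge0.
by apply: ler_sum => k _.
Qed.

Lemma LS4 (a1 a2 a3 a4 : R) h1 h2 h3 h4 :
  (forall I k, a1 * h1 I k + a2 * h2 I k <= a3 * h3 I k + a4 * h4 I k) ->
  a1 * LS h1 + a2 * LS h2 <= a3 * LS h3 + a4 * LS h4.
Proof.
move=> H; rewrite !LS_lin /LS; apply: ler_sum => I _.
apply: ler_wpM2l; first by rewrite divr_ge0 ?vol_ge0 ?ler0n.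
by apply: ler_sum => k _.
Qed.

Lemma ES_ext h h' : (forall I k, h I k = h' I k) -> ES h = ES h'.
Proof.
move=> H; rewrite /ES; apply: eq_bigr => I _; congr (_ * _).
by apply: eq_bigr => k _.
Qed.

Lemma dpartB u w I k :
  dpart x vtx (fun v => u v - w v) I k = dpart x vtx u I k - dpart x vtx w I k.
Proof. by rewrite /dpart -mulrBl; congr (_ * _); ring. Qed.

Lemma dpartD u w I k :
  dpart x vtx (fun v => u v + w v) I k = dpart x vtx u I k + dpart x vtx w I k.
Proof. by rewrite /dpart -mulrDl; congr (_ * _); ring. Qed.

Definition Fl (eta t : R) : R := t ^+ 2 * (t - 1) ^+ 2 / (4 * eta ^+ 2).
Definition Sf (u : V -> R) := stiff x vtx u u.
Definition Eh (eta : R) (u : V -> R) := Sf u / 2 + lumped x vtx (fun v => Fl eta (u v)).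

Lemma Fl_split (eta a1 a0 : R) : 0 < eta ->
  Fl eta a1 - Fl eta a0 <= (Fcp eta a1 + Fep eta a0) * (a1 - a0).
Proof.
move=> he.
have hc : 0 < (4 * eta ^+ 2)^-1 by rewrite invr_gt0; apply: mulr_gt0 => //; apply: exprn_gt0.
rewrite /Fl /Fcp /Fep.
set c := (4 * eta ^+ 2)^-1.
have -> : a1 ^+ 2 * (a1 - 1) ^+ 2 / (4 * eta ^+ 2) = c * (a1 ^+ 2 * (a1 - 1) ^+ 2) by rewrite mulrC.
have -> : a0 ^+ 2 * (a0 - 1) ^+ 2 / (4 * eta ^+ 2) = c * (a0 ^+ 2 * (a0 - 1) ^+ 2) by rewrite mulrC.
have -> : ((4 * a1 ^+ 3 - 6 * a1 ^+ 2 + 3 * a1) / (4 * eta ^+ 2) + - a0 / (4 * eta ^+ 2)) * (a1 - a0)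
   = c * ((4 * a1 ^+ 3 - 6 * a1 ^+ 2 + 3 * a1 - a0) * (a1 - a0)) by rewrite /c; ring.
rewrite -mulrBr; apply: ler_wpM2l; first exact: ltW.
have key : 2 * ((4 * a1 ^+ 3 - 6 * a1 ^+ 2 + 3 * a1 - a0) * (a1 - a0) -
   (a1 ^+ 2 * (a1 - 1) ^+ 2 - a0 ^+ 2 * (a0 - 1) ^+ 2)) =
   (a0 - a1) ^+ 2 * (2 * (a0 + a1 - 1) ^+ 2 + (2 * a1 - 1) ^+ 2 + 1) by ring.
have : 0 <= (a0 - a1) ^+ 2 * (2 * (a0 + a1 - 1) ^+ 2 + (2 * a1 - 1) ^+ 2 + 1).
  apply: mulr_ge0; first exact: sqr_ge0.
  have := sqr_ge0 (a0 + a1 - 1); have := sqr_ge0 (2 * a1 - 1); lra.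
lra.
Qed.


Lemma stiffA_ES A u w : stiffA x vtx A u w =
  ES (fun I k => A I k * dpart x vtx u I k * dpart x vtx w I k).
Proof. by []. Qed.
Lemma stiff_ES u w : stiff x vtx u w =
  ES (fun I k => 1 * dpart x vtx u I k * dpart x vtx w I k).
Proof. by []. Qed.
Lemma lumped_LS f : lumped x vtx f = LS (fun I k => f (vtx I k)).
Proof. by []. Qed.
Lemma hprod_LS f g : hprod x vtx f g = LS (fun I k => f (vtx I k) * g (vtx I k)).
Proof. by []. Qed.

Lemma div_ss (a b : R) : 0 <= a * b -> 0 <= a / b.
Proof.
move=> H; case: (ltgtP b 0) => hb.
- have ha : a <= 0 by nra.
  by apply: mulr_le0 => //; rewrite invr_le0 ltW.
- have ha : 0 <= a by nra.
  by apply: divr_ge0 => //; apply: ltW.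
- by rewrite hb invr0 mulr0.
Qed.

Lemma step (dt eps eta : R) (p0 p1 mu : V -> R) :
  0 < dt -> 0 < eps -> eps < 1/2 -> 0 < eta ->
  Gscheme x vtx dt eps eta p0 p1 mu ->
  Eh eta p1 <= Eh eta p0 /\
  lumped x vtx (fun v => Geps eps (p1 v)) <=
    lumped x vtx (fun v => Geps eps (p0 v)) + dt / (8 * eta ^+ 2) * (Sf p0 + Sf p1).
Proof.
move=> hdt he he2 heta [eq1 eq2].
pose dl := fun v => p1 v - p0 v.
pose f := fun v => Fcp eta (p1 v) + Fep eta (p0 v).
pose g' := fun v => dGeps eps (p1 v).
pose w := fun v => mu v - f v.
have MGge0 : forall I k, 0 <= MG vtx eps p1 I k.
  move=> I k; rewrite /MG; case: ifP => [hne|_].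
    apply: div_ss.
    set ak := p1 (vertk vtx I k); set a0 := p1 (vert0 vtx I).
    case: (lerP ak a0) => h.
      have := dG_le eps he he2 _ _ h; nra.
    have := dG_le eps he he2 _ _ (ltW h); nra.
  by rewrite /d2Geps invrK; apply: Meps_ge0.
have E1 := eq1 mu; have E1g := eq1 g'.
have E2 := eq2 dl; have E2w := eq2 w.
rewrite /Eh /Sf.
rewrite !stiffA_ES !stiff_ES !lumped_LS !hprod_LS in E1 E1g E2 E2w *.
have hMG := @ES4 0 0 1 0 (fun _ _ => 0) (fun _ _ => 0)
  (fun I k => MG vtx eps p1 I k * dpart x vtx mu I k * dpart x vtx mu I k) (fun _ _ => 0).
have {hMG} hMG : 0 <= ES (fun I k => MG vtx eps p1 I k * dpart x vtx mu I k * dpart x vtx mu I k).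
  suff H : forall I (k : 'I_d), 0 * 0 + 0 * 0 <= 1 * (MG vtx eps p1 I k * dpart x vtx mu I k * dpart x vtx mu I k) + 0 * 0.
    by have := hMG H; rewrite !mul0r mul1r !addr0.
  move=> I k; rewrite !mul0r mul1r !addr0 -mulrA; apply: mulr_ge0 => //; rewrite -expr2; exact: sqr_ge0.
have hsym : LS (fun I k => mu (vtx I k) * dl (vtx I k)) = LS (fun I k => dl (vtx I k) * mu (vtx I k)).
  by rewrite /LS; apply: eq_bigr => I _; congr (_ * _); apply: eq_bigr => k _; rewrite mulrC.
have hdti : 0 < dt^-1 by rewrite invr_gt0.
have hneg : LS (fun I k => dl (vtx I k) * mu (vtx I k)) <= 0.
  have : dt^-1 * LS (fun I k => dl (vtx I k) * mu (vtx I k)) <= 0 by lra.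
  by rewrite pmulr_rle0.
have hS : 1/2 * ES (fun I k => 1 * dpart x vtx p1 I k * dpart x vtx p1 I k)
   + -(1/2) * ES (fun I k => 1 * dpart x vtx p0 I k * dpart x vtx p0 I k)
   <= 1 * ES (fun I k => 1 * dpart x vtx p1 I k * dpart x vtx dl I k) + 0 * ES (fun _ _ => 0).
  apply: ES4 => I k; rewrite /dl dpartB.
  set P := dpart x vtx p1 I k; set Q := dpart x vtx p0 I k.
  have := sqr_ge0 (P - Q); nra.
have hF : 1 * LS (fun I k => Fl eta (p1 (vtx I k))) + -1 * LS (fun I k => Fl eta (p0 (vtx I k)))
   <= 1 * LS (fun I k => f (vtx I k) * dl (vtx I k)) + 0 * LS (fun _ _ => 0).
  apply: LS4 => I k; rewrite /f /dl.
  have := Fl_split eta (p1 (vtx I k)) (p0 (vtx I k)) heta; lra.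
have hT : 1 * LS (fun I k => Geps eps (p1 (vtx I k))) + -1 * LS (fun I k => Geps eps (p0 (vtx I k)))
   <= 1 * LS (fun I k => dl (vtx I k) * g' (vtx I k)) + 0 * LS (fun _ _ => 0).
  apply: LS4 => I k; rewrite /dl /g'.
  have := Tg_all eps he he2 (p1 (vtx I k)) (p0 (vtx I k)); rewrite /Tg; lra.
have hMGg : ES (fun I k => MG vtx eps p1 I k * dpart x vtx mu I k * dpart x vtx g' I k)
   = ES (fun I k => 1 * dpart x vtx mu I k * dpart x vtx p1 I k).
  apply: ES_ext => I k; rewrite /MG /dpart /g'.
  set ak := p1 (vertk vtx I k); set a0 := p1 (vert0 vtx I).
  case: ifP => hne.
    have hne' : dGeps eps ak - dGeps eps a0 != 0.
      rewrite subr_eq0; case: (ltgtP ak a0) hne => // h _.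
      - by rewrite lt_eqF // (dG_lt eps he he2).
      - by rewrite gt_eqF // (dG_lt eps he he2).
    have E : (ak - a0) / (dGeps eps ak - dGeps eps a0) * (dGeps eps ak - dGeps eps a0) = ak - a0.
      by rewrite divfK.
    rewrite -[in RHS]E; ring.
  move/negbFE/eqP: hne => ->; rewrite !subrr !mul0r !mulr0; ring.
have hW : 0 * LS (fun _ _ => 0) + 0 * LS (fun _ _ => 0)
   <= 1 * LS (fun I k => mu (vtx I k) * w (vtx I k)) + -1 * LS (fun I k => f (vtx I k) * w (vtx I k)).
  apply: LS4 => I k; rewrite /w.
  have := sqr_ge0 (mu (vtx I k) - f (vtx I k)); nra.
have hc : 0 <= (8 * eta ^+ 2)^-1.
  by rewrite invr_ge0; apply: mulr_ge0 => //; apply: exprn_ge0; apply: ltW.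
have hV : 1 * ES (fun I k => 1 * dpart x vtx p1 I k * dpart x vtx w I k)
   + - (8 * eta ^+ 2)^-1 * ES (fun I k => 1 * dpart x vtx p0 I k * dpart x vtx p0 I k)
   <= 1 * ES (fun I k => 1 * dpart x vtx mu I k * dpart x vtx p1 I k)
   + (8 * eta ^+ 2)^-1 * ES (fun I k => 1 * dpart x vtx p1 I k * dpart x vtx p1 I k).
  apply: ES4 => I k; rewrite /w dpartB /f dpartD.
  have hFe : dpart x vtx (fun v => Fep eta (p0 v)) I k = - (2 * (8 * eta ^+ 2)^-1) * dpart x vtx p0 I k.
    rewrite /dpart /Fep.
    have h4 : (4 * eta ^+ 2)^-1 = 2 * (8 * eta ^+ 2)^-1.
      have : eta ^+ 2 != 0 by rewrite expf_neq0 // gt_eqF.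
      move=> hn; field; by rewrite gt_eqF.
    rewrite h4; ring.
  have hFc : 0 <= dpart x vtx p1 I k * dpart x vtx (fun v => Fcp eta (p1 v)) I k.
    rewrite /dpart.
    set ak := p1 (vertk vtx I k); set a0 := p1 (vert0 vtx I); set h := hk x vtx I k.
    have -> : (ak - a0) / h * ((Fcp eta ak - Fcp eta a0) / h) =
      ((ak - a0) * (Fcp eta ak - Fcp eta a0)) * (h^-1 ^+ 2) by ring.
    apply: mulr_ge0; last exact: sqr_ge0.
    rewrite /Fcp -mulrBl.
    have -> : (4 * ak ^+ 3 - 6 * ak ^+ 2 + 3 * ak - (4 * a0 ^+ 3 - 6 * a0 ^+ 2 + 3 * a0)) =
      (ak - a0) * (3 * (ak + a0 - 1) ^+ 2 + (ak - a0) ^+ 2) by ring.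
    set q := 3 * (ak + a0 - 1) ^+ 2 + (ak - a0) ^+ 2.
    have hq : 0 <= q by apply: addr_ge0; [apply: mulr_ge0 => //; exact: sqr_ge0 | exact: sqr_ge0].
    have hi : 0 <= (4 * eta ^+ 2)^-1.
      by rewrite invr_ge0; apply: mulr_ge0 => //; apply: exprn_ge0; apply: ltW.
    have := mulr_ge0 (mulr_ge0 (sqr_ge0 (ak - a0)) hq) hi.
    lra.
  rewrite hFe.
  move: hFc.
  set P := dpart x vtx p1 I k; set Q := dpart x vtx p0 I k; set M := dpart x vtx mu I k.
  set Rr := dpart x vtx (fun v => Fcp eta (p1 v)) I k.
  move: hc; set c := (8 * eta ^+ 2)^-1 => hc hFc.
  have := mulr_ge0 hc (sqr_ge0 (P - Q)).
  lra.
subst dl f g' w; cbv beta in *.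
split.
  lra.
rewrite hMGg in E1g.
set A := LS _ in E1g; rewrite -/A in hT.
have hA : A = - (dt * ES (fun I k => 1 * dpart x vtx mu I k * dpart x vtx p1 I k)).
  have hdt0 : dt != 0 by rewrite gt_eqF.
  have E' : dt^-1 * A = - ES (fun I k => 1 * dpart x vtx mu I k * dpart x vtx p1 I k) by lra.
  apply: (mulfI (invr_neq0 hdt0)); rewrite E' mulrN mulrA mulVf // mul1r //.
have hst : 0 <= ES (fun I k => 1 * dpart x vtx p1 I k * dpart x vtx (fun v => mu v - (Fcp eta (p1 v) + Fep eta (p0 v))) I k).
  lra.
set Y := ES (fun I k => 1 * dpart x vtx mu I k * dpart x vtx p1 I k) in hA hV *.
set S0 := ES (fun I k => 1 * dpart x vtx p0 I k * dpart x vtx p0 I k) in hV *.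
set S1 := ES (fun I k => 1 * dpart x vtx p1 I k * dpart x vtx p1 I k) in hV *.
have hY : - ((8 * eta ^+ 2)^-1 * (S0 + S1)) <= Y by lra.
have : - (dt * Y) <= dt * ((8 * eta ^+ 2)^-1 * (S0 + S1)).
  rewrite -mulrN; apply: ler_wpM2l; [exact: ltW|lra].
have -> : dt / (8 * eta ^+ 2) * (S0 + S1) = dt * ((8 * eta ^+ 2)^-1 * (S0 + S1)) by ring.
lra.
Qed.
End Mesh2.

Section H.
Context {R : realType}.

Lemma big_tuple_cons (T : finType) p (F : p.+1.-tuple T -> R) :
  \sum_(t : p.+1.-tuple T) F t = \sum_(x : T) \sum_(t : p.-tuple T) F [tuple of x :: t].
Proof.
rewrite pair_big /=.
rewrite (reindex (fun xt : T * p.-tuple T => [tuple of xt.1 :: xt.2])) //=.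
exists (fun t : p.+1.-tuple T => (thead t, behead_tuple t)).
  by move=> [y t] _ /=; congr pair; apply: val_inj.
by move=> t _; apply: val_inj; rewrite /= [in RHS](tuple_eta t).
Qed.

Lemma big_tuple0 (T : finType) (F : 0.-tuple T -> R) :
  \sum_(t : 0.-tuple T) F t = F [tuple].
Proof.
rewrite (big_pred1 [tuple]) // => t /=; rewrite (tuple0 t).
by apply/esym/eqP; apply: val_inj.
Qed.

Lemma sum_tuple2 (T : finType) (F : 2.-tuple T -> R) :
  \sum_(t : 2.-tuple T) F t = \sum_x1 \sum_x2 F [tuple x1; x2].
Proof.
rewrite big_tuple_cons; apply: eq_bigr => x1 _.
rewrite big_tuple_cons; apply: eq_bigr => x2 _.
by rewrite big_tuple0; congr F; apply: val_inj.
Qed.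
Lemma sum_tuple3 (T : finType) (F : 3.-tuple T -> R) :
  \sum_(t : 3.-tuple T) F t = \sum_x1 \sum_x2 \sum_x3 F [tuple x1; x2; x3].
Proof.
rewrite big_tuple_cons; apply: eq_bigr => x1 _.
rewrite big_tuple_cons; apply: eq_bigr => x2 _.
rewrite big_tuple_cons; apply: eq_bigr => x3 _.
by rewrite big_tuple0; congr F; apply: val_inj.
Qed.
Lemma sum_tuple4 (T : finType) (F : 4.-tuple T -> R) :
  \sum_(t : 4.-tuple T) F t =
  \sum_x1 \sum_x2 \sum_x3 \sum_x4 F [tuple x1; x2; x3; x4].
Proof.
rewrite big_tuple_cons; apply: eq_bigr => x1 _.
rewrite big_tuple_cons; apply: eq_bigr => x2 _.
rewrite big_tuple_cons; apply: eq_bigr => x3 _.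
rewrite big_tuple_cons; apply: eq_bigr => x4 _.
by rewrite big_tuple0; congr F; apply: val_inj.
Qed.

Lemma hpolyE (d p : nat) (a : 'I_d.+1 -> R) : hpoly p a =
  \sum_(t : p.-tuple 'I_d.+1) (if sorted (fun i j : 'I_d.+1 => (i <= j)%N) t then \prod_(i <- t) a i else 0).
Proof. by rewrite /hpoly big_mkcond. Qed.

Definition cc (d p : nat) : R := ((d`! * p`!)%:R / ((d + p)`!)%:R).

Ltac pos := repeat first [exact: sqr_ge0 | exact: ler0n | apply: addr_ge0 |
  rewrite invr_ge0 | apply: mulr_ge0].

Ltac expand := rewrite !hpolyE ?sum_tuple4 ?sum_tuple3 ?sum_tuple2 /=;
  rewrite !big_ord_recl !big_ord0 /= ?big_cons ?big_nil /=.

Lemma quart1 (a : 'I_2 -> R) :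
  (2%:R)^-1 * \sum_(k < 2) (a k ^+ 2 * (a k - 1) ^+ 2) <=
  40 * (cc 1 4 * hpoly 4 a - 2 * (cc 1 3 * hpoly 3 a) + cc 1 2 * hpoly 2 a).
Proof.
rewrite /cc (_ : ((1`! * 2`!)%:R / ((1 + 2)`!)%:R : R) = (2%:R / 6%:R)) // (_ : ((1`! * 3`!)%:R / ((1 + 3)`!)%:R : R) = (6%:R / 24%:R)) // (_ : ((1`! * 4`!)%:R / ((1 + 4)`!)%:R : R) = (24%:R / 120%:R)) //; expand.
set a0 := a ord0; set a1 := a (lift ord0 ord0).
rewrite -subr_ge0.
set X := (X in _ <= X).
have -> : X = (15%:R / 2%:R) * ((a0 * a0 - (a0 + a0) / 2) + (8%:R / 15%:R) * (a0 * a1 - (a0 + a1) / 2) + (8%:R / 45%:R) * (a1 * a1 - (a1 + a1) / 2)) ^+ 2 + (16%:R / 5%:R) * ((a0 * a1 - (a0 + a1) / 2) + (37%:R / 36%:R) * (a1 * a1 - (a1 + a1) / 2)) ^+ 2 + (629%:R / 162%:R) * ((a1 * a1 - (a1 + a1) / 2)) ^+ 2 by rewrite /X; field.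
pos.
Qed.

Lemma quad1 (a : 'I_2 -> R) :
  cc 1 2 * hpoly 2 a <= (2%:R)^-1 * \sum_(k < 2) a k ^+ 2.
Proof.
rewrite /cc (_ : ((1`! * 2`!)%:R / ((1 + 2)`!)%:R : R) = (2%:R / 6%:R)) //; expand.
set a0 := a ord0; set a1 := a (lift ord0 ord0).
rewrite -subr_ge0.
set X := (X in _ <= X).
have -> : X = (6%:R)^-1 * ((a0 - a1) ^+ 2) by rewrite /X; field.
pos.
Qed.

Lemma quart2 (a : 'I_3 -> R) :
  (3%:R)^-1 * \sum_(k < 3) (a k ^+ 2 * (a k - 1) ^+ 2) <=
  40 * (cc 2 4 * hpoly 4 a - 2 * (cc 2 3 * hpoly 3 a) + cc 2 2 * hpoly 2 a).
Proof.
rewrite /cc (_ : ((2`! * 2`!)%:R / ((2 + 2)`!)%:R : R) = (4%:R / 24%:R)) // (_ : ((2`! * 3`!)%:R / ((2 + 3)`!)%:R : R) = (12%:R / 120%:R)) // (_ : ((2`! * 4`!)%:R / ((2 + 4)`!)%:R : R) = (48%:R / 720%:R)) //; expand.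
set a0 := a ord0; set a1 := a (lift ord0 ord0); set a2 := a (lift ord0 (lift ord0 ord0)).
rewrite -subr_ge0.
set X := (X in _ <= X).
have -> : X = (7%:R / 3%:R) * ((a0 * a0 - (a0 + a0) / 2) + (4%:R / 7%:R) * (a0 * a1 - (a0 + a1) / 2) + (4%:R / 7%:R) * (a0 * a2 - (a0 + a2) / 2) + (4%:R / 21%:R) * (a1 * a1 - (a1 + a1) / 2) + (4%:R / 21%:R) * (a1 * a2 - (a1 + a2) / 2) + (4%:R / 21%:R) * (a2 * a2 - (a2 + a2) / 2)) ^+ 2 + (64%:R / 63%:R) * ((a0 * a1 - (a0 + a1) / 2) + (1%:R / 8%:R) * (a0 * a2 - (a0 + a2) / 2) + (17%:R / 16%:R) * (a1 * a1 - (a1 + a1) / 2) + (5%:R / 8%:R) * (a1 * a2 - (a1 + a2) / 2) + (3%:R / 16%:R) * (a2 * a2 - (a2 + a2) / 2)) ^+ 2 + 1%:R * ((a0 * a2 - (a0 + a2) / 2) + (1%:R / 18%:R) * (a1 * a1 - (a1 + a1) / 2) + (5%:R / 9%:R) * (a1 * a2 - (a1 + a2) / 2) + (19%:R / 18%:R) * (a2 * a2 - (a2 + a2) / 2)) ^+ 2 + (89%:R / 81%:R) * ((a1 * a1 - (a1 + a1) / 2) + (44%:R / 89%:R) * (a1 * a2 - (a1 + a2) / 2) + (8%:R / 89%:R) * (a2 * a2 - (a2 + a2) / 2)) ^+ 2 + (64%:R / 89%:R) * ((a1 * a2 - (a1 + a2) / 2) + (11%:R / 16%:R) * (a2 * a2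 - (a2 + a2) / 2)) ^+ 2 + (3%:R / 4%:R) * ((a2 * a2 - (a2 + a2) / 2)) ^+ 2 by rewrite /X; field.
pos.
Qed.

Lemma quad2 (a : 'I_3 -> R) :
  cc 2 2 * hpoly 2 a <= (3%:R)^-1 * \sum_(k < 3) a k ^+ 2.
Proof.
rewrite /cc (_ : ((2`! * 2`!)%:R / ((2 + 2)`!)%:R : R) = (4%:R / 24%:R)) //; expand.
set a0 := a ord0; set a1 := a (lift ord0 ord0); set a2 := a (lift ord0 (lift ord0 ord0)).
rewrite -subr_ge0.
set X := (X in _ <= X).
have -> : X = (12%:R)^-1 * ((a0 - a1) ^+ 2 + (a0 - a2) ^+ 2 + (a1 - a2) ^+ 2) by rewrite /X; field.
pos.
Qed.

Lemma quart3 (a : 'I_4 -> R) :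
  (4%:R)^-1 * \sum_(k < 4) (a k ^+ 2 * (a k - 1) ^+ 2) <=
  40 * (cc 3 4 * hpoly 4 a - 2 * (cc 3 3 * hpoly 3 a) + cc 3 2 * hpoly 2 a).
Proof.
rewrite /cc (_ : ((3`! * 2`!)%:R / ((3 + 2)`!)%:R : R) = (12%:R / 120%:R)) // (_ : ((3`! * 3`!)%:R / ((3 + 3)`!)%:R : R) = (36%:R / 720%:R)) // (_ : ((3`! * 4`!)%:R / ((3 + 4)`!)%:R : R) = (144%:R / (70%:R * 72%:R))); last by rewrite -natrM.
expand.
set a0 := a ord0; set a1 := a (lift ord0 ord0); set a2 := a (lift ord0 (lift ord0 ord0)); set a3 := a (lift ord0 (lift ord0 (lift ord0 ord0))).
rewrite -subr_ge0.
set X := (X in _ <= X).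
have -> : X = (25%:R / 28%:R) * ((a0 * a0 - (a0 + a0) / 2) + (16%:R / 25%:R) * (a0 * a1 - (a0 + a1) / 2) + (16%:R / 25%:R) * (a0 * a2 - (a0 + a2) / 2) + (16%:R / 25%:R) * (a0 * a3 - (a0 + a3) / 2) + (16%:R / 75%:R) * (a1 * a1 - (a1 + a1) / 2) + (16%:R / 75%:R) * (a1 * a2 - (a1 + a2) / 2) + (16%:R / 75%:R) * (a1 * a3 - (a1 + a3) / 2) + (16%:R / 75%:R) * (a2 * a2 - (a2 + a2) / 2) + (16%:R / 75%:R) * (a2 * a3 - (a2 + a3) / 2) + (16%:R / 75%:R) * (a3 * a3 - (a3 + a3) / 2)) ^+ 2 + (208%:R / 525%:R) * ((a0 * a1 - (a0 + a1) / 2) + (1%:R / 26%:R) * (a0 * a2 - (a0 + a2) / 2) + (1%:R / 26%:R) * (a0 * a3 - (a0 + a3) / 2) + (59%:R / 52%:R) * (a1 * a1 - (a1 + a1) / 2) + (17%:R / 26%:R) * (a1 * a2 - (a1 + a2) / 2) + (17%:R / 26%:R) * (a1 * a3 - (a1 + a3) / 2) + (9%:R / 52%:R) * (a2 * a2 - (a2 + a2) / 2) + (9%:R / 52%:R) * (a2 * a3 - (a2 + a3) / 2) + (9%:R / 52%:R) * (a3 * a3 - (a3 + a3) / 2)) ^+ 2 + (36%:R / 91%:R) * ((a0 * a2 - (a0 + a2) / 2) + (1%:R / 27%:R) * (a0 * a3 - (a0 + a3) / 2) + (7%:R / 54%:R) * (a1 * a1 - (a1 + a1) / 2) + (17%:R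 / 27%:R) * (a1 * a2 - (a1 + a2) / 2) + (4%:R / 27%:R) * (a1 * a3 - (a1 + a3) / 2) + (61%:R / 54%:R) * (a2 * a2 - (a2 + a2) / 2) + (35%:R / 54%:R) * (a2 * a3 - (a2 + a3) / 2) + (1%:R / 6%:R) * (a3 * a3 - (a3 + a3) / 2)) ^+ 2 + (32%:R / 81%:R) * ((a0 * a3 - (a0 + a3) / 2) + (1%:R / 8%:R) * (a1 * a1 - (a1 + a1) / 2) + (1%:R / 8%:R) * (a1 * a2 - (a1 + a2) / 2) + (5%:R / 8%:R) * (a1 * a3 - (a1 + a3) / 2) + (1%:R / 8%:R) * (a2 * a2 - (a2 + a2) / 2) + (5%:R / 8%:R) * (a2 * a3 - (a2 + a3) / 2) + (9%:R / 8%:R) * (a3 * a3 - (a3 + a3) / 2)) ^+ 2 + (83%:R / 252%:R) * ((a1 * a1 - (a1 + a1) / 2) + (50%:R / 83%:R) * (a1 * a2 - (a1 + a2) / 2) + (50%:R / 83%:R) * (a1 * a3 - (a1 + a3) / 2) + (2%:R / 83%:R) * (a2 * a2 - (a2 + a2) / 2) + (2%:R / 83%:R) * (a2 * a3 - (a2 + a3) / 2) + (2%:R / 83%:R) * (a3 * a3 - (a3 + a3) / 2)) ^+ 2 + (313%:R / 1162%:R) * ((a1 * a2 - (a1 + a2) / 2) + - (19%:R / 313%:R) * (a1 * a3 - (a1 + a3) / 2) + (225%:R / 313%:R) * (a2 * a2 - (a2 + a2) / 2) + (343%:R / 939%:R) * (a2 * a3 - (a2 + a3) / 2) + (11%:R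 / 939%:R) * (a3 * a3 - (a3 + a3) / 2)) ^+ 2 + (84%:R / 313%:R) * ((a1 * a3 - (a1 + a3) / 2) + (1%:R / 18%:R) * (a2 * a2 - (a2 + a2) / 2) + (7%:R / 18%:R) * (a2 * a3 - (a2 + a3) / 2) + (13%:R / 18%:R) * (a3 * a3 - (a3 + a3) / 2)) ^+ 2 + (143%:R / 756%:R) * ((a2 * a2 - (a2 + a2) / 2) + (92%:R / 143%:R) * (a2 * a3 - (a2 + a3) / 2) + - (4%:R / 143%:R) * (a3 * a3 - (a3 + a3) / 2)) ^+ 2 + (301%:R / 1287%:R) * ((a2 * a3 - (a2 + a3) / 2) + (23%:R / 43%:R) * (a3 * a3 - (a3 + a3) / 2)) ^+ 2 + (21%:R / 172%:R) * ((a3 * a3 - (a3 + a3) / 2)) ^+ 2 by rewrite /X; field.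
pos.
Qed.

Lemma quad3 (a : 'I_4 -> R) :
  cc 3 2 * hpoly 2 a <= (4%:R)^-1 * \sum_(k < 4) a k ^+ 2.
Proof.
rewrite /cc (_ : ((3`! * 2`!)%:R / ((3 + 2)`!)%:R : R) = (12%:R / 120%:R)) //; expand.
set a0 := a ord0; set a1 := a (lift ord0 ord0); set a2 := a (lift ord0 (lift ord0 ord0)); set a3 := a (lift ord0 (lift ord0 (lift ord0 ord0))).
rewrite -subr_ge0.
set X := (X in _ <= X).
have -> : X = (20%:R)^-1 * ((a0 - a1) ^+ 2 + (a0 - a2) ^+ 2 + (a0 - a3) ^+ 2 + (a1 - a2) ^+ 2 + (a1 - a3) ^+ 2 + (a2 - a3) ^+ 2) by rewrite /X; field.
pos.
Qed.

End H.

Section Fin.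
Context {R : realType}.

Lemma quadD d (hd : (1 <= d <= 3)%N) (a : 'I_d.+1 -> R) :
  cc d 2 * hpoly 2 a <= (d.+1)%:R^-1 * \sum_(k < d.+1) a k ^+ 2.
Proof.
case: d hd a => [|[|[|[|d]]]] // _ a; [exact: quad1 | exact: quad2 | exact: quad3].
Qed.

Lemma quartD d (hd : (1 <= d <= 3)%N) (a : 'I_d.+1 -> R) :
  (d.+1)%:R^-1 * \sum_(k < d.+1) (a k ^+ 2 * (a k - 1) ^+ 2) <=
  40 * (cc d 4 * hpoly 4 a - 2 * (cc d 3 * hpoly 3 a) + cc d 2 * hpoly 2 a).
Proof.
case: d hd a => [|[|[|[|d]]]] // _ a; [exact: quart1 | exact: quart2 | exact: quart3].
Qed.

Context {d : nat} {V Elt : finType}.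
Variables (x : V -> 'I_d -> R) (vtx : Elt -> 'I_d.+1 -> V).
Hypothesis hd : (1 <= d <= 3)%N.

Lemma intpow2_le (u : V -> R) : intpow x vtx u 2 <= lumped x vtx (fun v => u v ^+ 2).
Proof.
rewrite /intpow /lumped; apply: ler_sum => I _.
have := @quadD d hd (fun k => u (vtx I k)); rewrite /cc => H.
rewrite -mulrA -mulrA; apply: ler_wpM2l; first exact: vol_ge0.
exact: H.
Qed.

Lemma lumpedFl_le (eta : R) (u : V -> R) : 0 < eta ->
  lumped x vtx (fun v => Fl eta (u v)) <=
  40 * ((intpow x vtx u 4 - 2 * intpow x vtx u 3 + intpow x vtx u 2) / (4 * eta ^+ 2)).
Proof.
move=> heta.
rewrite /intpow /lumped [2 * _]mulr_sumr -sumrB -big_split /= mulr_suml mulr_sumr.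
apply: ler_sum => I _.
have := @quartD d hd (fun k => u (vtx I k)); rewrite /cc => H.
have hX : 0 <= (4 * eta ^+ 2)^-1.
  by rewrite invr_ge0; apply: mulr_ge0 => //; apply: exprn_ge0; apply: ltW.
rewrite /Fl -mulr_suml.
set S := \sum_(k < d.+1) _.
set Q := (_ * hpoly 4 _ - _ + _) in H.
have -> : vol x vtx I / (d.+1)%:R * (S / (4 * eta ^+ 2)) =
  vol x vtx I * ((d.+1)%:R^-1 * S) * (4 * eta ^+ 2)^-1 by ring.
have -> : 40 * ((vol x vtx I * ((d`! * 4`!)%:R / (d + 4)`!%:R) * hpoly 4 (fun k => u (vtx I k)) -
   2 * (vol x vtx I * ((d`! * 3`!)%:R / (d + 3)`!%:R) * hpoly 3 (fun k => u (vtx I k))) +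
   vol x vtx I * ((d`! * 2`!)%:R / (d + 2)`!%:R) * hpoly 2 (fun k => u (vtx I k))) /
  (4 * eta ^+ 2)) = vol x vtx I * (40 * Q) * (4 * eta ^+ 2)^-1 by rewrite /Q; ring.
apply: ler_wpM2r => //; apply: ler_wpM2l; first exact: vol_ge0.
exact: H.
Qed.


Lemma Sf_ge0 (u : V -> R) : 0 <= Sf x vtx u.
Proof.
apply: sumr_ge0 => I _; apply: mulr_ge0; first exact: vol_ge0.
apply: sumr_ge0 => k _; rewrite mul1r -expr2; exact: sqr_ge0.
Qed.

Lemma Fl_ge0 (eta : R) (u : V -> R) : 0 < eta -> 0 <= lumped x vtx (fun v => Fl eta (u v)).
Proof.
move=> heta; apply: sumr_ge0 => I _; apply: mulr_ge0.
  by rewrite divr_ge0 ?vol_ge0 ?ler0n.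
apply: sumr_ge0 => k _; rewrite /Fl; apply: divr_ge0.
  by apply: mulr_ge0; apply: sqr_ge0.
by apply: mulr_ge0 => //; apply: exprn_ge0; apply: ltW.
Qed.

Lemma lumped_le (f g : V -> R) : (forall v, f v <= g v) -> lumped x vtx f <= lumped x vtx g.
Proof.
move=> H; apply: ler_sum => I _; apply: ler_wpM2l.
  by rewrite divr_ge0 ?vol_ge0 ?ler0n.
by apply: ler_sum => k _.
Qed.

Lemma lumpedZ (c : R) (f : V -> R) : lumped x vtx (fun v => c * f v) = c * lumped x vtx f.
Proof.
rewrite /lumped mulr_sumr; apply: eq_bigr => I _.
by rewrite -mulr_sumr mulrCA.
Qed.

End Fin.

Theorem corollary1 (R : realType) :
  exists C : R -> R -> R -> R,
  forall (d : nat) (V Elt : finType) (x : V -> 'I_d -> R) (vtx : Elt -> 'I_d.+1 -> V),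
    (1 <= d <= 3)%N -> structured_mesh x vtx ->
  forall (eps eta T : R) (N n : nat) (phi mu : nat -> V -> R),
    0 < eps < 1 / 2 -> 0 < eta <= 1 -> 0 < T -> (0 < N)%N -> (n < N)%N ->
    (forall m, (m <= n)%N ->
       Gscheme x vtx (T / N%:R) eps eta (phi m) (phi m.+1) (mu m.+1)) ->
    let Cst := C T (energy x vtx eta (phi 0%N))
                   (lumped x vtx (fun v => Geps eps (phi 0%N v))) in
    intpow x vtx (fun v => Num.min (phi n.+1 v) 0) 2
      <= Cst * (eps * (1 - eps) / eta ^+ 2) <= Cst * (eps / eta ^+ 2)
    /\
    intpow x vtx (fun v => Num.max (phi n.+1 v - 1) 0) 2
      <= Cst * (eps * (1 - eps) / eta ^+ 2) <= Cst * (eps / eta ^+ 2).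
Proof.
exists (fun T E G => 2 * Num.max G 0 + 40 * (Num.max T 0 * Num.max E 0)).
move=> d V Elt x vtx hd _ eps eta T N n phi mu /andP[he he2] /andP[heta heta1] hT hN hn hsch Cst.
set dt := T / N%:R.
have hNr : 0 < N%:R :> R by rewrite ltr0n.
have hdt : 0 < dt by rewrite /dt divr_gt0.
set E0 := energy x vtx eta (phi 0%N).
set G0 := lumped x vtx (fun v => Geps eps (phi 0%N v)).
set Eh0 := Eh x vtx eta (phi 0%N).
set c := (2 * eta ^+ 2)^-1.
have hc : 0 <= c by rewrite invr_ge0; apply: mulr_ge0 => //; apply: exprn_ge0; apply: ltW.
have hstep := fun m (hm : (m <= n)%N) =>
  step x vtx dt eps eta (phi m) (phi m.+1) (mu m.+1) hdt he he2 heta (hsch m hm).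
have hE : forall m, (m <= n.+1)%N -> Eh x vtx eta (phi m) <= Eh0.
  elim => [//|m IH] hm.
  have [h1 _] := hstep m hm.
  by apply: le_trans h1 (IH (ltnW hm)).
have hS : forall m, (m <= n.+1)%N -> Sf x vtx (phi m) <= 2 * Eh0.
  move=> m hm; have := hE m hm; rewrite /Eh.
  have := Fl_ge0 x vtx eta (phi m) heta; lra.
have hEh0 : 0 <= Eh0 by have := hS 0%N isT; have := Sf_ge0 x vtx (phi 0%N); lra.
have hG : forall m, (m <= n.+1)%N ->
   lumped x vtx (fun v => Geps eps (phi m v)) <= G0 + m%:R * (dt * Eh0 * c).
  elim => [_|m IH hm]; first by rewrite mul0r addr0.
  have [_ h2] := hstep m hm.
  have h3 : dt / (8 * eta ^+ 2) * (Sf x vtx (phi m) + Sf x vtx (phi m.+1)) <= dt * Eh0 * c.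
    have h4 : dt * Eh0 * c = dt / (8 * eta ^+ 2) * (4 * Eh0).
      by rewrite /c; field; rewrite gt_eqF.
    rewrite h4; apply: ler_wpM2l.
      apply: divr_ge0; first exact: ltW.
      by apply: mulr_ge0 => //; apply: exprn_ge0; apply: ltW.
    have := hS m (ltnW hm); have := hS m.+1 hm; lra.
  have := IH (ltnW hm); rewrite -natr1 mulrDl mul1r; lra.
have hnT : n.+1%:R * dt <= T.
  rewrite /dt mulrCA; rewrite -[leRHS]mulr1; apply: ler_wpM2l; first exact: ltW.
  by rewrite ler_pdivrMr // mul1r ler_nat.
have hE0 : Eh0 <= 40 * E0.
  rewrite /Eh0 /E0 /Eh /energy.
  have := lumpedFl_le x vtx hd eta (phi 0%N) heta.
  have := Sf_ge0 x vtx (phi 0%N); rewrite /Sf; lra.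
have hGn : lumped x vtx (fun v => Geps eps (phi n.+1 v)) <= G0 + T * (40 * E0) * c.
  have := hG n.+1 (leqnn _).
  have : n.+1%:R * (dt * Eh0 * c) <= T * (40 * E0) * c.
    have a1 : n.+1%:R * dt * Eh0 <= T * Eh0 by apply: ler_wpM2r.
    have a2 : T * Eh0 <= T * (40 * E0) by apply: ler_wpM2l => //; apply: ltW.
    have -> : n.+1%:R * (dt * Eh0 * c) = (n.+1%:R * dt * Eh0) * c by ring.
    by apply: ler_wpM2r => //; apply: le_trans a1 a2.
  lra.
have hm0 : 0 < eps * (1 - eps) by apply: mulr_gt0; lra.
have heta2 : 0 < eta ^+ 2 by apply: exprn_gt0.
have hi1 : 1 <= (eta ^+ 2)^-1.
  rewrite invr_ge1 ?unitfE ?gt_eqF //.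
  by rewrite expr_le1 //; apply: ltW.
have hCst0 : 0 <= Cst.
  rewrite /Cst; apply: addr_ge0; apply: mulr_ge0 => //; try apply: mulr_ge0;
    by rewrite le_max lexx orbT.
have key : forall X : R, X <= 2 * (eps * (1 - eps)) * lumped x vtx (fun v => Geps eps (phi n.+1 v)) ->
    X <= Cst * (eps * (1 - eps) / eta ^+ 2) <= Cst * (eps / eta ^+ 2).
  move=> X hX; apply/andP; split; last first.
    apply: ler_wpM2l => //; apply: ler_wpM2r; first by rewrite invr_ge0 ltW.
    have : 0 <= eps * eps by apply: mulr_ge0; lra.
    lra.
  apply: (le_trans hX).
  set m := eps * (1 - eps).
  have hm : 0 < m := hm0.
  set A := Num.max G0 0; set B := Num.max E0 0.
  have hA : G0 <= A by rewrite /A le_max lexx.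
  have hA0 : 0 <= A by rewrite /A le_max lexx orbT.
  have hB : E0 <= B by rewrite /B le_max lexx.
  have hB0 : 0 <= B by rewrite /B le_max lexx orbT.
  have hTm : Num.max T 0 = T by apply/max_idPl; apply: ltW.
  rewrite /Cst hTm -/A -/B.
  set ih := (eta ^+ 2)^-1.
  have hc' : c = 2^-1 * ih by rewrite /c /ih invfM.
  have h1 : 2 * m * lumped x vtx (fun v => Geps eps (phi n.+1 v)) <= 2 * m * (G0 + T * (40 * E0) * c).
    by apply: ler_wpM2l => //; apply: mulr_ge0 => //; apply: ltW.
  apply: (le_trans h1).
  have hG0A : m * G0 <= m * A * ih.
    apply: (le_trans (y := m * A)); first by apply: ler_wpM2l => //; apply: ltW.
    rewrite -[leLHS]mulr1; apply: ler_wpM2l => //; by apply: mulr_ge0 => //; apply: ltW.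
  have hEB : m * T * E0 * ih <= m * T * B * ih.
    apply: ler_wpM2r; first by apply: (le_trans _ hi1).
    by apply: ler_wpM2l => //; apply: mulr_ge0; apply: ltW.
  have e1 : 2 * m * (G0 + T * (40 * E0) * c) = 2 * (m * G0) + 40 * (m * T * E0 * ih).
    by rewrite hc'; field.
  have e2 : (2 * A + 40 * (T * B)) * (m * ih) = 2 * (m * A * ih) + 40 * (m * T * B * ih).
    by ring.
  lra.
split; apply: key.
- apply: (le_trans (intpow2_le x vtx hd _)).
  rewrite -lumpedZ; apply: lumped_le => v.
  exact: Geps_neg he he2 (phi n.+1 v).
- apply: (le_trans (intpow2_le x vtx hd _)).
  rewrite -lumpedZ; apply: lumped_le => v.
  exact: Geps_pos he he2 (phi n.+1 v).
Qed.
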